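(* The diameter of $CK(2,4)$ is $7$. The diameter of $CK(2,3)$ is infinite, and for every $\ell\ge 5$ the diameter of $CK(2,\ell)$ is infinite (i.e. these digraphs are not strongly connected).
   Context: $CK(2,\ell)$ has as vertices all sequences $a_1\ldots a_\ell\in\{0,1,2\}^\ell$ with $a_i\neq a_{i+1}$ for $1\le i\le\ell-1$ and $a_1\ne a_\ell$, and an arc from $a_1\ldots a_\ell$ to $b_1\ldots b_\ell$ iff both are vertices and $b_i=a_{i+1}$ for $1\le i\le \ell-1$. The diameter is the maximum over ordered pairs $(u,v)$ of vertices of the length of a shortest directed $u$–$v$ path, and is infinite if some such path does not exist. *)

(* Defs.v *)
From mathcomp Require Import all_boot.
Set Implicit Arguments. Unset Strict Implicit. Unset Printing Implicit Defensive.

(* Symbols {0,1,2} as 'I_3; a word a_1 ... a_l is a seq 'I_3 of size l,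
   with a_{i+1} = nth ord0 s i (0-based indexing). *)
Definition sym := 'I_3.

Definition ck_vertex (l : nat) (s : seq sym) : bool :=
  [&& size s == l,
      all (fun i => nth ord0 s i != nth ord0 s i.+1) (iota 0 l.-1)
    & nth ord0 s 0 != nth ord0 s l.-1].

Definition ck_arc (l : nat) : rel (seq sym) := fun a b =>
  [&& ck_vertex l a, ck_vertex l b
    & all (fun i => nth ord0 b i == nth ord0 a i.+1) (iota 0 l.-1)].

Definition ck_walk (l k : nat) (u v : seq sym) : Prop :=
  exists p : seq (seq sym), [/\ size p = k, path (ck_arc l) u p & last u p = v].

Definition ck_diameter_is (l d : nat) : Prop :=
  (forall u v, ck_vertex l u -> ck_vertex l v -> exists2 k, k <= d & ck_walk l k u v)
  /\ exists u v, [/\ ck_vertex l u, ck_vertex l v &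
                     forall k, ck_walk l k u v -> d <= k].

Definition ck_diameter_infinite (l : nat) : Prop :=
  exists u v, [/\ ck_vertex l u, ck_vertex l v & forall k, ~ ck_walk l k u v].

(* Main.v *)
Require Import Defs.
From mathcomp Require Import all_boot zify.

Definition neqr : rel sym := fun a b => a != b.
Definition st (a b : sym) : nat := (val b == (val a).+1 %% 3).

Fixpoint ppc (s : seq sym) : nat :=
  match s with
  | x :: ((y :: _) as s') => st x y + ppc s'
  | _ => 0
  end.

Definition cw (s : seq sym) := rcons s (head ord0 s).
Definition wind (s : seq sym) := ppc (cw s).

Lemma ppc_cons x y s : ppc (x :: y :: s) = st x y + ppc (y :: s).
Proof. by []. Qed.

Lemma ppc_rcons y z w : ppc (y :: rcons z w) = ppc (y :: z) + st (last y z) w.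
Proof.
elim: z y => [|a z IH] y; first by rewrite /= addn0.
by rewrite rcons_cons !ppc_cons IH addnA.
Qed.

Lemma vertexE l x t :
  ck_vertex l (x :: t) = ((size t).+1 == l) && sorted neqr (rcons (x :: t) x).
Proof.
rewrite /ck_vertex; case: eqP => [<-|] //=.
rewrite rcons_path; congr andb.
  apply/allP/(pathP ord0) => H i.
    by move=> Hi; apply: H; rewrite mem_iota.
  by rewrite mem_iota add0n => /H.
by rewrite -[size t]/((size (x :: t)).-1) nth_last /= eq_sym.
Qed.

Lemma key (a1 m1 L x : sym) : a1 != m1 -> L != a1 -> L != x -> x != m1 ->
  st a1 m1 + st L a1 = st L x + st x m1.
Proof.
case: a1 => [[|[|[|?]]] ?] //; case: m1 => [[|[|[|?]]] ?] //;
case: L => [[|[|[|?]]] ?] //; case: x => [[|[|[|?]]] ?] //.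
Qed.

Lemma arc_rcons l a b : 0 < l -> ck_arc l a b ->
  b = rcons (behead a) (nth ord0 b l.-1).
Proof.
move=> l0 /and3P[/and3P[/eqP sa _ _] /and3P[/eqP sb _ _] /allP H].
apply: (@eq_from_nth _ ord0).
  by rewrite size_rcons size_behead sa sb prednK.
move=> i; rewrite sb => il.
rewrite nth_rcons size_behead sa.
case: ltngtP => [h||h].
- by rewrite nth_behead; apply/eqP/H; rewrite mem_iota.
- by move=> h; move: il; rewrite ltnNge -(prednK l0) h.
- by rewrite h.
Qed.

Lemma wind_arc l a b : 1 < l -> ck_arc l a b -> wind a = wind b.
Proof.
move=> l1 Hab.
have Hb := @arc_rcons l a b (ltnW l1) Hab.
move: Hab => /and3P[Va Vb _].
move: (nth ord0 b l.-1) Hb Vb => x -> Vb.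
case: a Va Vb => [|a1 [|m1 m']].
- by move=> /and3P[/eqP Hl]; rewrite -Hl in l1.
- by rewrite vertexE => /andP[/eqP Hl]; rewrite -Hl in l1.
rewrite /= !vertexE => /andP[_ Ha] /andP[_ Hb].
rewrite /wind /cw /head !rcons_cons ppc_cons !ppc_rcons last_rcons.
rewrite !rcons_cons /= in Ha Hb.
move: Ha => /andP[h1]; rewrite rcons_path => /andP[_ h2].
move: Hb; rewrite rcons_path => /andP[]; rewrite rcons_path last_rcons => /andP[_ h3 h4].
have := @key a1 m1 (last m1 m') x h1 h2 h3 h4; lia.
Qed.

Lemma wind_walk l k u v : 1 < l -> ck_walk l k u v -> wind u = wind v.
Proof.
move=> l1 [p [_ Hp <-]].
elim: p u Hp => [|w p IH] u //= /andP[Huw Hp].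
by rewrite (@wind_arc l u w l1 Huw) IH.
Qed.

Definition o0 : sym := ord0.
Definition o1 : sym := @Ordinal 3 1 isT.
Definition o2 : sym := @Ordinal 3 2 isT.

Fixpoint R n (t : seq sym) := if n is n'.+1 then o0 :: o1 :: o2 :: R n' t else t.
Definition sw (x : sym) : sym := if val x == 1 then o2 else if val x == 2 then o1 else o0.

Lemma R_cons n t' : exists z, R n (o0 :: t') = o0 :: z.
Proof. by case: n => [|n] /=; eauto. Qed.

Lemma R_rcons n t x : rcons (R n t) x = R n (rcons t x).
Proof. by elim: n => //= n ->. Qed.

Lemma size_R n t : size (R n t) = 3 * n + size t.
Proof. by elim: n => //= n ->; lia. Qed.

Lemma sorted_R (f : sym -> sym) n t' :
  neqr (f o0) (f o1) -> neqr (f o1) (f o2) -> neqr (f o2) (f o0) ->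
  sorted neqr (map f (o0 :: t')) -> sorted neqr (map f (R n (o0 :: t'))).
Proof.
move=> h1 h2 h3 Ht; elim: n => //= n IH.
have [z Hz] := R_cons n t'.
by move: IH; rewrite Hz /= h1 h2 h3.
Qed.

Lemma ppc_R (f : sym -> sym) n t' :
  ppc (map f (R n (o0 :: t'))) =
  n * (st (f o0) (f o1) + st (f o1) (f o2) + st (f o2) (f o0)) + ppc (map f (o0 :: t')).
Proof.
elim: n => // n IH.
have [z Hz] := R_cons n t'.
rewrite [R _ _]/= [map _ _]/= !ppc_cons Hz map_cons ppc_cons; move: IH; rewrite Hz map_cons => ->; lia.
Qed.

Lemma inf_gen n t' : 0 < size t' ->
  sorted neqr (rcons (o0 :: t') o0) -> sorted neqr (map sw (rcons (o0 :: t') o0)) ->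
  ppc (map sw (rcons (o0 :: t') o0)) != 3 * n + ppc (rcons (o0 :: t') o0) ->
  ck_diameter_infinite (3 * n + (size t').+1).
Proof.
move=> H0 H1 H2 H3.
have [z Hz] := R_cons n t'.
exists (R n (o0 :: t')), (map sw (R n (o0 :: t'))).
have Hs : size z = 3 * n + size t'.
  by have := size_R n (o0 :: t'); rewrite Hz /=; lia.
split.
- rewrite Hz vertexE Hs /= addnS eqxx /=.
  rewrite -[path _ _ _]/(sorted neqr (rcons (o0 :: z) o0)) -Hz R_rcons.
  have := @sorted_R id n (rcons t' o0) isT isT isT; rewrite !map_id; apply; exact: H1.
- rewrite Hz /= vertexE size_map Hs /= addnS eqxx /=.
  rewrite -map_rcons -[path _ _ _]/(sorted neqr (map sw (rcons (o0 :: z) o0))) -Hz R_rcons.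
  have := @sorted_R sw n (rcons t' o0) isT isT isT; apply; exact: H2.
move=> k Hw.
have l1 : 1 < 3 * n + (size t').+1 by lia.
have := @wind_walk _ _ _ _ l1 Hw.
have Hh : head ord0 (R n (o0 :: t')) = o0 by rewrite Hz.
have Hh' : head ord0 (map sw (R n (o0 :: t'))) = sw o0 by rewrite Hz.
rewrite /wind /cw Hh Hh' -map_rcons !R_rcons.
have := @ppc_R sw n (rcons t' o0) => ->.
have := @ppc_R id n (rcons t' o0); rewrite !map_id => ->.
have A : st o0 o1 + st o1 o2 + st o2 o0 = 3 by [].
have B : st (sw o0) (sw o1) + st (sw o1) (sw o2) + st (sw o2) (sw o0) = 0 by [].
rewrite A B => E; move/eqP: H3; apply; rewrite rcons_cons; lia.
Qed.

Lemma inf_ge5 l : 5 <= l -> ck_diameter_infinite l.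
Proof.
move=> l5.
have : (l = 3 * (l %/ 3 - 1) + (size [:: o1; o2]).+1 /\ 0 < l %/ 3 - 1) \/
           (l = 3 * (l %/ 3 - 1) + (size [:: o1; o0; o1]).+1 /\ 0 < l %/ 3 - 1) \/
           (l = 3 * (l %/ 3) + (size [:: o1]).+1 /\ 0 < l %/ 3) by rewrite /=; lia.
have e1 : st o0 o1 = 1 by [].
have e2 : st o1 o2 = 1 by [].
have e3 : st o2 o0 = 1 by [].
have e4 : st o1 o0 = 0 by [].
have e5 : st (sw o0) (sw o1) = 0 by [].
have e6 : st (sw o1) (sw o2) = 0 by [].
have e7 : st (sw o2) (sw o0) = 0 by [].
have e8 : st (sw o1) (sw o0) = 1 by [].
case=> [[E h]|[[E h]|[E h]]]; rewrite E; apply: inf_gen => //;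
  rewrite /= ?e1 ?e2 ?e3 ?e4 ?e5 ?e6 ?e7 ?e8; lia.
Qed.

Lemma inf3 : ck_diameter_infinite 3.
Proof.
exists [:: o0; o1; o2], [:: o0; o2; o1]; split => // k Hw.
by have := @wind_walk 3 k _ _ isT Hw.
Qed.

Definition L3 : seq sym := [:: o0; o1; o2].

Lemma memL3 (x : sym) : x \in L3.
Proof.
case: x => [[|[|[|m]]] Hm] //; rewrite !inE; apply/orP; do ?[by left; apply/eqP/val_inj]; right; apply/orP; do ?[by left; apply/eqP/val_inj]; by right; apply/eqP/val_inj.
Qed.

Definition cands (u : seq sym) : seq (seq sym) :=
  [seq rcons (behead u) x | x <- L3].

Fixpoint walkb (k : nat) (u v : seq sym) : bool :=
  match k with
  | 0 => u == v
  | k'.+1 => has (fun w => if ck_arc 4 u w then walkb k' w v else false) (cands u)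
  end.

Lemma walkb_sound k u v : walkb k u v -> ck_walk 4 k u v.
Proof.
elim: k u => [|k IH] u.
  by move/eqP=> ->; exists [::].
move/hasP => [w _ /andP[Huw /IH [p [Hs Hp Hl]]]].
by exists (w :: p); split => //=; rewrite ?Hs ?Huw ?Hp.
Qed.

Lemma walkb_complete k u v : ck_walk 4 k u v -> walkb k u v.
Proof.
elim: k u => [|k IH] u [p [Hs Hp Hl]].
  by case: p Hs Hp Hl => //= _ _ ->.
case: p Hs Hp Hl => // w p [Hs] /andP[Huw Hp] Hl.
apply/hasP; exists w.
  rewrite [w](@arc_rcons 4 u w isT Huw); apply: map_f; exact: memL3.
by rewrite Huw; apply: IH; exists p.
Qed.

Lemma far : all (fun k => ~~ walkb k [:: o0; o1; o0; o2] [:: o2; o1; o0; o1]) (iota 0 7).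
Proof. by vm_compute. Qed.

Lemma allpairs4 : all (fun a => all (fun b => all (fun c => all (fun d =>
  all (fun e => all (fun f => all (fun g => all (fun h =>
  if ck_vertex 4 [:: a; b; c; d] then if ck_vertex 4 [:: e; f; g; h] then
   has (fun k => walkb k [:: a; b; c; d] [:: e; f; g; h]) (iota 0 8) else true else true) L3) L3) L3) L3) L3) L3) L3) L3.
Proof. by vm_compute. Qed.

Lemma diam4 : ck_diameter_is 4 7.
Proof.
split.
  case=> [|a [|b [|c [|d [|? ?]]]]] // [|e [|f [|g [|h [|? ?]]]]] //;
    try by case/andP.
  move=> Hu Hv.
  move: allpairs4 => /allP/(_ a (memL3 _))/allP/(_ b (memL3 _))/allP/(_ c (memL3 _))/allP/(_ d (memL3 _)).
  move=> /allP/(_ e (memL3 _))/allP/(_ f (memL3 _))/allP/(_ g (memL3 _))/allP/(_ h (memL3 _)).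
  rewrite Hu Hv => /hasP[k Hk1 Hk].
  by exists k; [rewrite mem_iota in Hk1; rewrite -ltnS | exact: walkb_sound].
exists [:: o0; o1; o0; o2], [:: o2; o1; o0; o1]; split; [by []|by []|].
move=> k /walkb_complete Hk; rewrite leqNgt; apply/negP => k7.
by move: far => /allP/(_ k); rewrite mem_iota k7 Hk => /(_ isT).
Qed.

Theorem lemma6 :
  ck_diameter_is 4 7 /\ ck_diameter_infinite 3 /\
  (forall l, 5 <= l -> ck_diameter_infinite l).
Proof. by split; [exact: diam4 | split; [exact: inf3 | exact: inf_ge5]]. Qed.
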